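(* Let $\mathcal F$ be a filtration array, $E=(E_{m,n})_{m,n\in\mathbb N}$ a nonnegative process adapted to $\mathcal F$, and $S=(S_n)_{n\in\mathbb N}$ a process adapted to $\mathcal F_{\infty,\bullet}$. If $E$ has the asymptotic supermartingale property (in $L_1$, for $\mathcal F$, uniformly in $\mathcal P$) and $E$ converges to $S$ in $L_1$ uniformly in $\mathcal P$, then $S$ is a supermartingale for $\mathcal P$ with respect to $\mathcal F_{\infty,\bullet}$.
   Context: $(\Omega,\mathcal A)$ is a measurable space, $\mathcal P$ a set of probability measures on it, $\mathbb N=\{0,1,\dots\}$. A filtration array is a family $(\mathcal F_{m,n})_{m,n\in\mathbb N}$ of sub-$\sigma$-algebras with $\mathcal F_{m,n}\subset\mathcal F_{m+1,n}\cap\mathcal F_{m,n+1}$; $\mathcal F_{\infty,n}:=\sigma(\bigcup_m\mathcal F_{m,n})$. Adapted means $E_{m,n}$ is $\mathcal F_{m,n}$-measurable. For $P\in\mathcal P$, $\delta_{m,n}=\mathbb E_P[E_{m,n+1}\mid\mathcal F_{m,n}]-E_{m,n}$ if $E_{m,n+1}$ is $P$-integrable and $\delta_{m,n}=\infty$ otherwise; $x^+=\max\{x,0\}$. The asymptotic supermartingale property: $\lim_m\sup_{P\in\mathcal P}\mathbb E_P[\delta_{m,n}^+]=0$ for every $n$. $E$ converges to $S$ in $L_1$ uniformly in $\mathcal P$ if all $E_{m,n},S_n$ are $P$-integrable for all $P\in\mathcal P$ and $\lim_m\sup_{P\in\mathcal P}\mathbb E_P[|E_{m,n}-S_n|]=0$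 for every $n$. A supermartingale for $\mathcal P$ w.r.t. a filtration $\mathcal G$ is a $\mathcal G$-adapted process with each $S_n$ $P$-integrable and $\mathbb E_P[S_{n+1}\mid\mathcal G_n]\le S_n$ $P$-a.s. for all $P\in\mathcal P$, $n$. *)

(* Defs.v *)
From HB Require Import structures.
From mathcomp Require Import all_boot all_order all_algebra.
From mathcomp Require Import all_classical all_reals all_analysis.
Set Implicit Arguments. Unset Strict Implicit. Unset Printing Implicit Defensive.
Import Order.TTheory GRing.Theory Num.Theory.
Local Open Scope classical_set_scope.
Local Open Scope ring_scope.

Section Defs.
Context {d : measure_display} {T : measurableType d} {R : realType}.

Definition sub_sigma (G : set (set T)) : Prop :=
  sigma_algebra setT G /\ G `<=` measurable.

Definition filtration_array (F : nat -> nat -> set (set T)) : Prop :=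
  (forall m n, sub_sigma (F m n)) /\
  (forall m n, F m n `<=` F m.+1 n /\ F m n `<=` F m n.+1).

Definition F_infty (F : nat -> nat -> set (set T)) (n : nat) : set (set T) :=
  <<s \bigcup_m F m n >>.

Definition Gmeasurable (G : set (set T)) (f : T -> R) : Prop :=
  forall B : set R, measurable B -> G (f @^-1` B).

Definition Pintegrable (P : probability T R) (f : T -> R) : Prop :=
  P.-integrable setT (EFin \o f).

Definition is_cond_exp (P : probability T R) (G : set (set T)) (X Y : T -> R) : Prop :=
  [/\ Gmeasurable G Y, Pintegrable P Y &
      forall A, G A -> (\int[P]_(x in A) (Y x)%:E = \int[P]_(x in A) (X x)%:E)%E].

(** a (chosen) version of E_P[X | G]; it is a genuine version whenever one
    exists, in particular whenever X is P-integrable and G is a sub-sigma-algebra *)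
Definition cond_exp (P : probability T R) (G : set (set T)) (X : T -> R) : T -> R :=
  xget (fun _ => 0) (is_cond_exp P G X).

Definition pos_part (x : R) : R := Num.max x 0.

Definition exp_delta_plus (P : probability T R) (G : set (set T)) (X Z : T -> R)
  : \bar R :=
  if `[< Pintegrable P X >] then
    (\int[P]_x (pos_part (cond_exp P G X x - Z x))%:E)%E
  else +oo%E.

(** asymptotic supermartingale property, uniformly in Pset:
    lim_m sup_{P in Pset} E_P[delta_{m,n}^+] = 0 for every n
    (stated in epsilon form; all quantities are >= 0) *)
Definition asymptotic_supermartingale (Pset : set (probability T R))
  (F : nat -> nat -> set (set T)) (E : nat -> nat -> T -> R) : Prop :=
  forall n (eps : R), 0 < eps -> exists M : nat, forall m, (M <= m)%N ->
    forall P, Pset P -> (exp_delta_plus P (F m n) (E m n.+1) (E m n) <= eps%:E)%E.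

Definition L1_unif_conv (Pset : set (probability T R))
  (E : nat -> nat -> T -> R) (S : nat -> T -> R) : Prop :=
  (forall P, Pset P -> forall m n, Pintegrable P (E m n) /\ Pintegrable P (S n)) /\
  (forall n (eps : R), 0 < eps -> exists M : nat, forall m, (M <= m)%N ->
    forall P, Pset P -> (\int[P]_x (`|E m n x - S n x|)%:E <= eps%:E)%E).

Definition supermartingale (Pset : set (probability T R))
  (G : nat -> set (set T)) (S : nat -> T -> R) : Prop :=
  (forall n, Gmeasurable (G n) (S n)) /\
  forall P, Pset P -> forall n, Pintegrable P (S n) /\
    {ae P, forall x, cond_exp P (G n) (S n.+1) x <= S n x}.

End Defs.

(* Main.v *)
Require Import Defs.
From HB Require Import structures.
From mathcomp Require Import all_boot all_order all_algebra.
From mathcomp Require Import all_classical all_reals all_analysis.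
From mathcomp Require Import measurable_realfun lra zify.
From Stdlib Require Import Lia.
Import Order.TTheory GRing.Theory Num.Theory.
Local Open Scope classical_set_scope.
Local Open Scope ring_scope.

Section condexp.
Context d (T : measurableType d) (R : realType) (P : probability T R)
  (G : set (set T)) (hG : sub_sigma G) (X : T -> R) (hX : Pintegrable P X).

Definition TG := g_sigma_algebraType G.
Definition idG (x : T) : TG := x.

Lemma measTG : G.-sigma.-measurable = G.
Proof. exact: (measurable_g_measurableTypeE hG.1). Qed.

Lemma mid : measurable_fun [set: T] idG.
Proof.
move=> _ B mB; rewrite setTI; rewrite measTG in mB; exact: hG.2.
Qed.

HB.instance Definition _ := isMeasurableFun.Build _ _ T TG idG mid.

Definition muG := distribution P idG.

Local Notation nu0 := (induced_charge hX).
Definition nuG := pushforward nu0 idG.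

Local Open Scope ereal_scope.
Let nuG0 : nuG set0 = 0.
Proof. by rewrite /nuG /pushforward preimage_set0 charge0. Qed.

Let nuG_finite A : measurable A -> nuG A \is a fin_num.
Proof.
move=> mA; rewrite /nuG /pushforward; apply: fin_num_measure.
by rewrite -[X in measurable X]setTI; exact: mid.
Qed.

Let nuG_sigma_additive : semi_sigma_additive nuG.
Proof.
move=> F mF tF mUF; rewrite /nuG /pushforward preimage_bigcup.
apply: charge_semi_sigma_additive.
- by move=> n; rewrite -[X in measurable X]setTI; exact: mid.
- apply/trivIsetP => /= i j _ _ ij; rewrite -preimage_setI.
  by move/trivIsetP : tF => /(_ _ _ _ _ ij) ->//; rewrite preimage_set0.
- by rewrite -preimage_bigcup -[X in measurable X]setTI; exact: mid.
Qed.

HB.instance Definition _ := isCharge.Build _ _ _ nuG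
  nuG0 nuG_finite nuG_sigma_additive.

Lemma nuG_dom : nuG `<< muG.
Proof.
apply/null_content_dominatesP => /= A mA muA.
have mA' : measurable (idG @^-1` A) by rewrite -[X in measurable X]setTI; exact: mid.
rewrite /nuG /pushforward /induced_charge.
apply: null_set_integral => //=.
exact: (measurable_funS measurableT (@subsetT _ _) (measurable_int _ hX)).
Qed.


Let f : TG -> \bar R := Radon_Nikodym nuG muG.
Let fin x : f x \is a fin_num.
Proof. exact: Radon_Nikodym_fin_num nuG_dom. Qed.
Let intf : muG.-integrable setT f.
Proof. exact: Radon_Nikodym_integrable nuG_dom. Qed.
Let mf := measurable_int _ intf.


Let fE : (EFin \o (fun x : T => fine (f (idG x)))) = f \o idG.
Proof. by apply/funext => x /=; rewrite fineK. Qed.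

Let mfid : measurable_fun setT (f \o idG).
Proof. exact: measurableT_comp mf mid. Qed.

Let intfid A : measurable A -> P.-integrable A (f \o idG).
Proof.
move=> mA; apply: (integrableS measurableT) => //.
apply/integrableP; split => //.
move/integrableP: intf => [_ H].
rewrite -(@ge0_integral_pushforward _ _ _ _ _ idG mid P setT (abse \o f)) //.
- exact: measurableT_comp.
- by move=> y _ /=; exact: abse_ge0.
Qed.

Lemma cond_exp_exists : exists Y, is_cond_exp P G X Y.
Proof.
exists (fun x : T => fine (f (idG x))); split.
- move=> B mB; rewrite -measTG.
  have := (measurableT_comp (@fine_measurable R setT measurableT) mf) measurableT B mB.
  by rewrite setTI.
- rewrite /Pintegrable fE; exact: intfid.
- move=> A GA.
  have mA : measurable A by exact: hG.2.
  have mAG : (G.-sigma).-measurable (A : set TG) by rewrite measTG.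
  transitivity (\int[P]_(x in A) (f \o idG) x).
    by apply: eq_integral => x _; rewrite /= fineK.
  rewrite -(@integral_pushforward _ _ _ _ _ idG mid P A f mf (intfid A mA) mAG).
  have h := @Radon_Nikodym_integral _ _ _ nuG muG A nuG_dom mAG.
  exact: (esym h).
Qed.

End condexp.

Set Implicit Arguments. Unset Strict Implicit.

Section helpers.
Context {d : measure_display} {T : measurableType d} {R : realType} {P : probability T R}.

Lemma cond_exp_spec (G : set (set T)) (X : T -> R) :
  sub_sigma G -> Pintegrable P X -> is_cond_exp P G X (cond_exp P G X).
Proof. by move=> hG hX; apply: xgetPex; exact: cond_exp_exists. Qed.

Lemma Gmeas_meas (G : set (set T)) (f : T -> R) :
  sub_sigma G -> Gmeasurable G f -> measurable_fun setT f.
Proof. by move=> hG hf _ B mB; rewrite setTI; apply: hG.2; exact: hf. Qed.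

Lemma PintS (f : T -> R) A : measurable A -> Pintegrable P f ->
  P.-integrable A (EFin \o f).
Proof. by move=> mA hf; apply: (integrableS measurableT) => //. Qed.

Lemma PintD (f g : T -> R) : Pintegrable P f -> Pintegrable P g ->
  Pintegrable P (f \+ g).
Proof.
move=> hf hg; rewrite /Pintegrable (_ : EFin \o (f \+ g) = ((EFin \o f) \+ (EFin \o g))%E).
  exact: integrableD.
by apply/funext => x.
Qed.

Lemma PintB (f g : T -> R) : Pintegrable P f -> Pintegrable P g ->
  Pintegrable P (f \- g).
Proof.
move=> hf hg; rewrite /Pintegrable (_ : EFin \o (f \- g) = ((EFin \o f) \- (EFin \o g))%E).
  exact: integrableB.
by apply/funext => x.
Qed.

Lemma Pintabs (f : T -> R) : Pintegrable P f -> Pintegrable P (fun x => `|f x|).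
Proof.
move=> hf; rewrite /Pintegrable (_ : EFin \o _ = abse \o (EFin \o f)).
  exact: integrable_abse.
by apply/funext => x.
Qed.

Lemma Pintpos (f : T -> R) : Pintegrable P f -> Pintegrable P (fun x => pos_part (f x)).
Proof.
move=> hf; rewrite /Pintegrable (_ : EFin \o _ = ((EFin \o f)^\+)%E).
  exact: integrable_funepos.
by apply/funext => x; rewrite funeposE /= /pos_part EFin_max.
Qed.

Local Open Scope ereal_scope.

Lemma PleA A (f g : T -> R) : measurable A -> Pintegrable P f -> Pintegrable P g ->
  (forall x, (f x <= g x)%R) ->
  \int[P]_(x in A) (f x)%:E <= \int[P]_(x in A) (g x)%:E.
Proof.
move=> mA hf hg fg; apply: le_integral => //; try exact: PintS.
by move=> x _; rewrite lee_fin.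
Qed.

Lemma PaddA A (f g : T -> R) : measurable A -> Pintegrable P f -> Pintegrable P g ->
  \int[P]_(x in A) (f x + g x)%:E =
  \int[P]_(x in A) (f x)%:E + \int[P]_(x in A) (g x)%:E.
Proof.
move=> mA hf hg; rewrite -(integralD_EFin mA (PintS mA hf) (PintS mA hg)).
by apply: eq_integral => x _.
Qed.

Lemma PsubA A (f : T -> R) : measurable A -> Pintegrable P f -> (forall x, 0 <= f x)%R ->
  \int[P]_(x in A) (f x)%:E <= \int[P]_x (f x)%:E.
Proof.
move=> mA hf f0; apply: ge0_subset_integral => //.
- exact: measurable_int hf.
- by move=> x _; rewrite lee_fin.
Qed.

Lemma int_cvg (f : T -> R) (A_ : (set T)^nat) (A : set T) :
  Pintegrable P f -> (forall k, measurable (A_ k)) -> measurable A ->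
  (forall x, \forall k \near \oo, (A_ k x <-> A x)) ->
  (\int[P]_(x in A_ k) (f x)%:E @[k --> \oo] --> \int[P]_(x in A) (f x)%:E)%classic.
Proof.
move=> hf mA_ mA hev.
have -> : (fun k => \int[P]_(x in A_ k) (f x)%:E) =
    (fun k => \int[P]_(x in setT) (((EFin \o f) \_ (A_ k)) x)).
  by apply/funext => k; rewrite integral_mkcond.
rewrite integral_mkcond.
have mf : measurable_fun setT (EFin \o f) := measurable_int _ hf.
apply: (@dominated_cvg _ _ _ P setT measurableT _ _ (abse \o (EFin \o f))).
- move=> k; apply/(measurable_restrictT _ (mA_ k)).
  exact: measurable_funTS.
- move=> x _; apply: cvg_near_cst.
  have := hev x; apply: filterS => k hk.
  rewrite /patch /=.
  have -> : (x \in A_ k) = (x \in A).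
    by apply/idP/idP => /set_mem h; apply/mem_set; [exact: hk.1 | exact: hk.2].
  by [].
- by move=> x _.
- exact: integrable_abse.
- move=> k x _; rewrite /patch /=; case: ifP => _ //.
  by rewrite abse0 /= lee_fin.
Qed.

End helpers.


Section main.
Context d (T : measurableType d) (R : realType)
  (Pset : set (probability T R))
  (F : nat -> nat -> set (set T)) (E : nat -> nat -> T -> R) (S : nat -> T -> R)
  (hF : filtration_array F)
  (E0 : forall m n x, 0 <= E m n x)
  (mE : forall m n, Gmeasurable (F m n) (E m n))
  (mS : forall n, Gmeasurable (F_infty F n) (S n))
  (hasym : asymptotic_supermartingale Pset F E)
  (hL1 : L1_unif_conv Pset E S).

Lemma Fmono n m m' : (m <= m')%N -> F m n `<=` F m' n.
Proof.
elim: m' => [|m' IH]; first by rewrite leqn0 => /eqP ->.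
rewrite leq_eqVlt => /orP [/eqP -> //| lt].
exact: subset_trans (IH lt) (hF.2 m' n).1.
Qed.

Lemma real_ineq1 (a b : R) : b <= a + `|a - b|.
Proof. have := ler_norm (b - a); rewrite distrC; lra. Qed.

Lemma real_ineq2 (a b : R) : a <= b + pos_part (a - b).
Proof.
have : a - b <= Num.max (a - b) 0 by rewrite le_max lexx.
rewrite /pos_part; lra.
Qed.

Local Open Scope ereal_scope.

Lemma leTr (a b c : \bar R) : b <= c -> a <= b -> a <= c.
Proof. by move=> h1 h2; exact: le_trans h2 h1. Qed.
Lemma leTl (a b c : \bar R) : a <= b -> b <= c -> a <= c.
Proof. by move=> h1 h2; exact: le_trans h1 h2. Qed.

Lemma stepA P n m0 A : Pset P -> F m0 n A ->
  \int[P]_(x in A) (S n.+1 x)%:E <= \int[P]_(x in A) (S n x)%:E.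
Proof.
move=> hP FA; apply/lee_addgt0Pr => e e0.
have e30 : (0 < e / 3)%R by rewrite divr_gt0.
have [M1 h1] := hasym n e30.
have [M2 h2] := hL1.2 n _ e30.
have [M3 h3] := hL1.2 n.+1 _ e30.
set m := maxn (maxn M1 M2) (maxn M3 m0).
have FmA : F m n A by apply: (@Fmono n m0 m) => //; rewrite /m; lia.
have hGs : sub_sigma (F m n) := (hF.1 m n).
have mA : measurable A := hGs.2 _ FmA.
have [iE0 iS0] := hL1.1 P hP m n.
have [iE1 iS1] := hL1.1 P hP m n.+1.
set Z := cond_exp P (F m n) (E m n.+1).
have [mZ iZ hZ] := cond_exp_spec hGs iE1.
have hd := h1 m ltac:(rewrite /m; lia) P hP.
rewrite /exp_delta_plus asboolT // in hd.
have c1 : \int[P]_(x in A) (S n.+1 x)%:E <=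
   \int[P]_(x in A) (E m n.+1 x)%:E + \int[P]_(x in A) (`|E m n.+1 x - S n.+1 x|)%:E.
  have ia := Pintabs (PintB iE1 iS1).
  rewrite -(@PaddA _ _ _ P A (E m n.+1) (fun x => `|E m n.+1 x - S n.+1 x|%R) mA iE1 ia).
  apply: PleA => //; first exact: PintD.
  by move=> x; exact: real_ineq1.
have c3 : \int[P]_(x in A) (Z x)%:E <=
   \int[P]_(x in A) (E m n x)%:E + \int[P]_(x in A) (pos_part (Z x - E m n x))%:E.
  have ia := Pintpos (PintB iZ iE0).
  rewrite -(@PaddA _ _ _ P A (E m n) (fun x => pos_part (Z x - E m n x)) mA iE0 ia).
  apply: PleA => //; first exact: PintD.
  by move=> x; exact: real_ineq2.
have c4 : \int[P]_(x in A) (E m n x)%:E <=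
   \int[P]_(x in A) (S n x)%:E + \int[P]_(x in A) (`|E m n x - S n x|)%:E.
  have ia := Pintabs (PintB iE0 iS0).
  rewrite -(@PaddA _ _ _ P A (S n) (fun x => `|E m n x - S n x|%R) mA iS0 ia).
  apply: PleA => //; first exact: PintD.
  move=> x; have := real_ineq1 (S n x) (E m n x).
  by rewrite distrC.
have c5 : \int[P]_(x in A) (`|E m n.+1 x - S n.+1 x|)%:E <= (e / 3)%:E.
  have h3p := h3 m ltac:(rewrite /m; lia) P hP.
  have h5 := PsubA (f := fun x => `|E m n.+1 x - S n.+1 x|%R) mA (Pintabs (PintB iE1 iS1)) (fun x => normr_ge0 _).
  exact: leTl h5 h3p.
have c7 : \int[P]_(x in A) (`|E m n x - S n x|)%:E <= (e / 3)%:E.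
  have h2p := h2 m ltac:(rewrite /m; lia) P hP.
  have h5 := PsubA (f := fun x => `|E m n x - S n x|%R) mA (Pintabs (PintB iE0 iS0)) (fun x => normr_ge0 _).
  exact: leTl h5 h2p.
have c6 : \int[P]_(x in A) (pos_part (Z x - E m n x))%:E <= (e / 3)%:E.
  have pos0 : forall x, (0 <= pos_part (Z x - E m n x))%R.
    by move=> x; rewrite /pos_part le_max lexx orbT.
  have h5 := PsubA (f := fun x => pos_part (Z x - E m n x)) mA (Pintpos (PintB iZ iE0)) pos0.
  exact: leTl h5 hd.
apply: leTl c1 _; rewrite -(hZ A FmA).
apply: leTl (leeD c3 c5) _.
apply: leTl (leeD (leeD c4 c6) (lexx _)) _.
apply: leTl (leeD (leeD (leeD (lexx _) c7) (lexx _)) (lexx _)) _.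
rewrite -!addeA -!EFinD.
have -> : (e / 3 + (e / 3 + e / 3) = e)%R by lra.
by [].
Qed.
Local Close Scope ereal_scope.

Lemma sigU G (A B : set T) : sub_sigma G -> G A -> G B -> G (A `|` B).
Proof. by move=> hG; rewrite -(@measTG _ _ _ hG) => hA hB; exact: measurableU. Qed.

Lemma sigD G (A B : set T) : sub_sigma G -> G A -> G B -> G (A `\` B).
Proof. by move=> hG; rewrite -(@measTG _ _ _ hG) => hA hB; exact: measurableD. Qed.

Lemma sigT G : sub_sigma G -> G (@setT T).
Proof. by move=> hG; rewrite -(@measTG _ _ _ hG); exact: measurableT. Qed.

Lemma sig0 G : sub_sigma G -> G (@set0 T).
Proof. by move=> hG; rewrite -(@measTG _ _ _ hG); exact: measurable0. Qed.

Lemma R0_setring n : setring (\bigcup_m F m n).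
Proof.
split.
- by exists 0%N => //; exact: sig0 (hF.1 0%N n).
- move=> A B [a _ Ha] [b _ Hb]; exists (maxn a b) => //.
  apply: sigU; first exact: hF.1.
  + by apply: (@Fmono n a) => //; lia.
  + by apply: (@Fmono n b) => //; lia.
- move=> A B [a _ Ha] [b _ Hb]; exists (maxn a b) => //.
  apply: sigD; first exact: hF.1.
  + by apply: (@Fmono n a) => //; lia.
  + by apply: (@Fmono n b) => //; lia.
Qed.

Lemma Finf_sub_sr n : F_infty F n `<=` <<sr \bigcup_m F m n >>.
Proof.
apply: smallest_sub; last exact: sub_smallest.
have [h0 hD hU] := smallest_sigma_ring (\bigcup_m F m n).
split => //.
move=> A hA; apply: (hD setT A _ hA); apply: (sub_smallest (X := \bigcup_m F m n)) => //.
by exists 0%N => //; exact: sigT (hF.1 0%N n).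
Qed.

Local Open Scope ereal_scope.

Lemma stepB P n A : Pset P -> F_infty F n A ->
  \int[P]_(x in A) (S n.+1 x)%:E <= \int[P]_(x in A) (S n x)%:E.
Proof.
move=> hP hA.
have [_ iS0] := hL1.1 P hP 0%N n.
have [_ iS1] := hL1.1 P hP 0%N n.+1.
pose C := [set B : set T | measurable B /\
  \int[P]_(x in B) (S n.+1 x)%:E <= \int[P]_(x in B) (S n x)%:E].
have RC : \bigcup_m F m n `<=` C.
  move=> B [m _ FB]; split; first exact: (hF.1 m n).2.
  exact: stepA hP FB.
have limle (A_ : (set T)^nat) (B : set T) : (forall k, C (A_ k)) -> measurable B ->
    (forall x, \forall k \near \oo, (A_ k x <-> B x)) -> C B.
  move=> CA mB hev; split => //.
  have mA_ k : measurable (A_ k) := (CA k).1.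
  have c1 := int_cvg iS1 mA_ mB hev.
  have c0 := int_cvg iS0 mA_ mB hev.
  rewrite -(cvg_lim (@ereal_hausdorff R) c1) -(cvg_lim (@ereal_hausdorff R) c0).
  apply: lee_lim.
  - by apply/cvg_ex; eexists; exact: c1.
  - by apply/cvg_ex; eexists; exact: c0.
  - by apply: nearW => k; exact: (CA k).2.
have monoC : monotone C.
  split.
  - move=> Fs ndF CF; apply: (limle Fs) => //.
      by apply: bigcupT_measurable => k; exact: (CF k).1.
    move=> x; have [[k0 _ Fk0]|nU] := pselect ((\bigcup_k Fs k) x).
      near=> k; split => [Fk|_]; first by exists k.
      have : (k0 <= k)%N by near: k; exists k0.
      by move=> /ndF; rewrite subsetEset; apply.
    apply: nearW => k; split => [Fk|//]; exfalso; apply: nU; by exists k.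
  - move=> Fs niF CF; apply: (limle Fs) => //.
      by apply: bigcapT_measurable => k; exact: (CF k).1.
    move=> x; have [hI|nI] := pselect ((\bigcap_k Fs k) x).
      by apply: nearW => k; split => // _; exact: hI.
    have [k0 nk0] : exists k0, ~ Fs k0 x.
      by apply: contrapT => h; apply: nI => k _; apply: contrapT => hk; apply: h; exists k.
    near=> k; split => [Fk|hk]; last by exfalso; exact: nI hk.
    exfalso; apply: nk0.
    have : (k0 <= k)%N by near: k; exists k0.
    by move=> /niF; rewrite subsetEset; apply.
have := monotone_setring_sub_g_sigma_ring monoC (R0_setring n) RC.
by move=> /(_ A (Finf_sub_sr hA)) [].
Unshelve. all: by end_near.
Qed.

Lemma Finf_subs n : sub_sigma (F_infty F n).
Proof.
split; first exact: smallest_sigma_algebra.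
apply: smallest_sub; first exact: sigma_algebra_measurable.
by move=> A [m _ h]; exact: (hF.1 m n).2.
Qed.

Lemma Gmeas_TG G (f : T -> R) : sub_sigma G -> Gmeasurable G f ->
  measurable_fun (setT : set (g_sigma_algebraType G)) f.
Proof. by move=> hG hf _ B mB; rewrite setTI (@measTG _ _ _ hG); exact: hf. Qed.

Lemma stepC P n : Pset P ->
  {ae P, forall x, (cond_exp P (F_infty F n) (S n.+1) x <= S n x)%R}.
Proof.
move=> hP.
have hG := Finf_subs n.
have [_ iS0] := hL1.1 P hP 0%N n.
have [_ iS1] := hL1.1 P hP 0%N n.+1.
set Y := cond_exp _ _ _.
have [mY iY hY] := cond_exp_spec hG iS1.
pose A := [set x | (S n x < Y x)%R].
have GA : F_infty F n A.
  have mSn : Gmeasurable (F_infty F n) (S n) by apply: mS.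
  have h := measurable_fun_ltr (Gmeas_TG hG mSn) (Gmeas_TG hG mY).
  have := h measurableT [set true] I.
  by rewrite setTI (@measTG _ _ _ hG).
have mA : measurable A := hG.2 _ GA.
have ineq := stepB hP GA.
rewrite -(hY A GA) in ineq.
have ig := Pintabs (PintB iY iS0).
have eqA : \int[P]_(x in A) (Y x)%:E =
    \int[P]_(x in A) (S n x)%:E + \int[P]_(x in A) (`|Y x - S n x|%R)%:E.
  rewrite -(@PaddA _ _ _ P A (S n) (fun x => `|Y x - S n x|%R) mA iS0 ig).
  apply: eq_integral => x /set_mem Ax.
  by rewrite gtr0_norm ?subr_gt0 // addrC subrK.
have J0 : \int[P]_(x in A) (`|Y x - S n x|%R)%:E = 0.
  apply/eqP; rewrite eq_le; apply/andP; split; last first.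
    by apply: integral_ge0 => x _; rewrite lee_fin.
  have fin : \int[P]_(x in A) (S n x)%:E \is a fin_num.
    by apply: integrable_fin_num => //; exact: PintS.
  by rewrite -(leeD2lE _ _ fin) adde0 -eqA.
have hae : ae_eq P A (EFin \o (Y \- S n)%R) (cst 0).
  have mf : measurable_fun A (EFin \o (Y \- S n)%R).
    exact: measurable_funTS (measurable_int _ (PintB iY iS0)).
  by apply/(ae_eq_integral_abs _ mA mf); exact: J0.
apply: filterS hae => x h; rewrite leNgt; apply/negP => lt.
have := h lt; rewrite /= => /eqP; rewrite eqe subr_eq0 => /eqP e.
by rewrite e ltxx in lt.
Qed.

End main.

Unset Implicit Arguments. Set Strict Implicit.

Theorem mainTheorem8 (d : measure_display) (T : measurableType d) (R : realType)
  (Pset : set (probability T R))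
  (F : nat -> nat -> set (set T)) (E : nat -> nat -> T -> R) (S : nat -> T -> R) :
  filtration_array F ->
  (forall m n x, 0 <= E m n x) ->
  (forall m n, Gmeasurable (F m n) (E m n)) ->
  (forall n, Gmeasurable (F_infty F n) (S n)) ->
  asymptotic_supermartingale Pset F E ->
  L1_unif_conv Pset E S ->
  supermartingale Pset (F_infty F) S.
Proof.
move=> hF E0 mE mS hasym hL1; split => // P hP n; split.
- exact: (hL1.1 P hP 0%N n).2.
  exact: (stepC hF mS hasym hL1 n hP).
Qed.
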